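(* Let $S\subseteq\mathcal S_d$ be nonempty, $[d]$ partitioned into groups $G_1,\dots,G_g$, $\bar\alpha,\bar\beta\in[0,1]^g$, $k\in[d]$, and assume an $(\bar\alpha,\bar\beta)$-$k$-fair ranking in $\mathcal S_d$ exists. Set $\alpha'_i=|G_i|-\lceil\beta_i k\rceil$ and $\beta'_i=|G_i|-\lfloor\alpha_i k\rfloor$. Let $\tau$ be an $(\bar\alpha',\bar\beta')$-constrained bottom-$(d-k)$ ranking minimizing $2\sum_{\pi\in S}\sum_{i\in D_\tau}(\tau(i)-\pi(i))\mathbb{1}[\pi(i)<\tau(i)]$, and let $\sigma\in\mathcal S_d$ be a ranking with $\sigma(a)=\tau(a)$ for all $a\in D_\tau$ minimizing $2\sum_{\pi\in S}\sum_{i\in[d]}(\sigma(i)-\pi(i))\mathbb{1}[\pi(i)<\sigma(i)]$ among such extensions. Let $\sigma^*$ be any $(\bar\alpha,\bar\beta)$-$k$-fair ranking minimizing $\mathrm{Obj}$, $\mathrm{OPT}=\mathrm{Obj}(\sigma^* )$, and $R^*=\{a\in[d]:\sigma^*(a)>k\}$. Then $\sigma$ is $(\bar\alpha,\bar\beta)$-$k$-fair and $\mathrm{Obj}(\sigma)\le\overrightarrow{\mathrm{Obj}}(\sigma^*_{R^*})+\mathrm{OPT}$.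
   Context: $\mathcal{S}_d$ is the set of rankings of $[d]$, $\pi(a)$ the rank of $a$. A ranking is $(\bar\alpha,\bar\beta)$-$k$-fair if for every $i\in[g]$ its top $k$ positions contain at least $\lfloor\alpha_i k\rfloor$ and at most $\lceil\beta_i k\rceil$ members of $G_i$. A bottom-$m$ ranking is a bijection $\tau:D_\tau\to\{d-m+1,\dots,d\}$, $D_\tau\subseteq[d]$; it is $(\bar\alpha',\bar\beta')$-constrained if $\alpha'_i\le|D_\tau\cap G_i|\le\beta'_i$ for all $i$. $F(\pi,\sigma)=\sum_i|\pi(i)-\sigma(i)|$, $\mathrm{Obj}(\sigma)=\sum_{\pi\in S}F(\pi,\sigma)$, and for $D\subseteq[d]$, $\overrightarrow{\mathrm{Obj}}(\sigma_D):=2\sum_{\pi\in S}\sum_{i\in D}(\sigma(i)-\pi(i))\mathbb{1}[\pi(i)<\sigma(i)]$. *)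

(* Defs.v *)
From HB Require Import structures.
From mathcomp Require Import all_boot all_order all_algebra all_fingroup.
From mathcomp Require Import reals.
Set Implicit Arguments. Unset Strict Implicit. Unset Printing Implicit Defensive.
Import Order.TTheory GRing.Theory Num.Theory.

(* [d] is represented by 'I_d (element a : 'I_d stands for a+1).
   A ranking in S_d is a permutation s : {perm 'I_d}; its rank function
   (1-based, values in 1..d) is [rank s]. *)
Definition rank (d : nat) (s : {perm 'I_d}) (a : 'I_d) : nat := (val (s a)).+1.

(* The partition of [d] into groups G_1..G_g is given by the map
   grp : 'I_d -> 'I_g sending each element to the index of its group. *)
Definition grpset (d g : nat) (grp : 'I_d -> 'I_g) (i : 'I_g) : {set 'I_d} :=
  [set a | grp a == i].

Definition topk_count (d g : nat) (grp : 'I_d -> 'I_g) (k : nat)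
  (s : {perm 'I_d}) (i : 'I_g) : nat :=
  #|[set a in grpset grp i | rank s a <= k]|.

Definition kfair (R : realType) (d g : nat) (grp : 'I_d -> 'I_g)
  (alpha beta : 'I_g -> R) (k : nat) (s : {perm 'I_d}) : Prop :=
  forall i : 'I_g,
    (Num.floor (alpha i * k%:R) <= (topk_count grp k s i)%:Z)%R /\
    ((topk_count grp k s i)%:Z <= Num.ceil (beta i * k%:R))%R.

(* A bottom-m ranking: a set D (its domain D_tau) and a map t : 'I_d -> nat
   whose restriction to D is a bijection D -> {d-m+1, ..., d}
   (values of t outside D are irrelevant). *)
Definition bottom_ranking (d m : nat) (D : {set 'I_d}) (t : 'I_d -> nat) : Prop :=
  [/\ (forall a, a \in D -> d - m + 1 <= t a <= d),
      {in D &, injective t} &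
      (forall r, d - m + 1 <= r <= d -> exists2 a, a \in D & t a = r)].

Definition constrained (d g : nat) (grp : 'I_d -> 'I_g)
  (alpha' beta' : 'I_g -> int) (D : {set 'I_d}) : Prop :=
  forall i : 'I_g,
    (alpha' i <= #|D :&: grpset grp i|%:Z)%R /\ (#|D :&: grpset grp i|%:Z <= beta' i)%R.

Definition footrule (d : nat) (p s : {perm 'I_d}) : nat :=
  \sum_(a : 'I_d) `|rank p a - rank s a|%N.

Definition Obj (d : nat) (S : {set {perm 'I_d}}) (s : {perm 'I_d}) : nat :=
  \sum_(p in S) footrule p s.

Definition Objdir (d : nat) (S : {set {perm 'I_d}}) (D : {set 'I_d})
  (f : 'I_d -> nat) : nat :=
  2 * \sum_(p in S) \sum_(a in D) (f a - rank p a) * (rank p a < f a).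

(* Main.v *)
Require Import Defs.
From HB Require Import structures.
From mathcomp Require Import all_boot all_order all_algebra all_fingroup.
From mathcomp Require Import reals.
From mathcomp Require Import zify.
Import Order.TTheory GRing.Theory Num.Theory.

Lemma trunc_ind (x p : nat) : (x - p) * (p < x) = x - p.
Proof. by case: ltnP => h; rewrite ?muln1 ?muln0 //; apply/esym/eqP; rewrite subn_eq0. Qed.

Lemma sum_rank d (s : {perm 'I_d}) :
  \sum_(a : 'I_d) rank s a = \sum_(a : 'I_d) (val a).+1.
Proof. by rewrite /rank [RHS](reindex_inj (@perm_inj _ s)). Qed.

Lemma footruleE d (p s : {perm 'I_d}) :
  footrule p s = 2 * \sum_(a : 'I_d) (rank s a - rank p a) * (rank p a < rank s a).
Proof.
rewrite /footrule.
under [in RHS]eq_bigr => a _ do rewrite trunc_ind.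
have E : forall x y : nat, `|x - y|%N = (x - y) + (y - x).
  move=> x y; case: (leqP x y) => h.
    by rewrite distnEr // (eqP (_ : x - y == 0)) ?subn_eq0.
  by rewrite distnEl ?(ltnW h) // (eqP (_ : y - x == 0)) ?addn0 ?subn_eq0 ?(ltnW h).

rewrite (eq_bigr _ (fun a _ => E _ _)).
rewrite -/(rank p _).

rewrite big_split /=.
have H : \sum_(a : 'I_d) (rank p a - rank s a) = \sum_(a : 'I_d) (rank s a - rank p a).
  apply: (@addnI (\sum_(a : 'I_d) rank s a)).
  have Hsp : \sum_(a < d) rank s a = \sum_(a < d) rank p a by rewrite !sum_rank.
  rewrite {2}Hsp -!big_split /=.

  apply: eq_bigr => a _; rewrite -!maxnE; exact: maxnC.
by rewrite H addnn -mul2n.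
Qed.

Lemma ObjE d (S : {set {perm 'I_d}}) s : Obj S s = Objdir S setT (rank s).
Proof.
rewrite /Obj /Objdir big_distrr /=; apply: eq_bigr => p _.
rewrite footruleE; congr (2 * _); apply: eq_bigl => a; by rewrite in_setT.
Qed.

Lemma Objdir_split d (S : {set {perm 'I_d}}) (D : {set 'I_d}) (f : 'I_d -> nat) :
  Objdir S setT f = Objdir S D f + Objdir S (~:D) f.
Proof.
rewrite /Objdir -mulnDr -big_split /=; congr (2 * _); apply: eq_bigr => p _.
by rewrite (@big_setID _ _ _ _ [set: _] D) setTI setTD.
Qed.

Lemma Objdir_eq d (S : {set {perm 'I_d}}) (D : {set 'I_d}) (f : 'I_d -> nat) f' :
  {in D, f =1 f'} -> Objdir S D f = Objdir S D f'.
Proof.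
move=> h; rewrite /Objdir; congr (2 * _); apply: eq_bigr => p _.
by apply: eq_bigr => a aD; rewrite h.
Qed.

Lemma Objdir_le d (S : {set {perm 'I_d}}) (D : {set 'I_d}) (f : 'I_d -> nat) f' :
  {in D, forall a, f a <= f' a} -> Objdir S D f <= Objdir S D f'.
Proof.
move=> h; rewrite /Objdir leq_mul2l; apply/orP; right; apply: leq_sum => p _.
by apply: leq_sum => a aD; rewrite !trunc_ind leq_sub2r // h.
Qed.

Lemma card_lt d m : #|[set i : 'I_d | i < m]| <= m.
Proof.
rewrite cardE -(size_map val) -[X in _ <= X](size_iota 0).
apply: uniq_leq_size; first by rewrite map_inj_uniq ?enum_uniq //; apply: val_inj.
move=> x /mapP [i]; rewrite mem_enum inE => him ->; by rewrite mem_iota.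
Qed.

Lemma card_inj_le (T : finType) (A B : {set T}) (h : T -> T) :
  injective h -> {in A, forall a, h a \in B} -> #|A| <= #|B|.
Proof.
move=> hi hAB; rewrite -(card_imset A hi); apply: subset_leq_card.
by apply/subsetP => x /imsetP [a aA ->]; apply: hAB.
Qed.

Lemma count_eq d g (grp : 'I_d -> 'I_g) k (s : {perm 'I_d}) (D : {set 'I_d}) i :
  (forall a, (rank s a <= k) = (a \notin D)) ->
  topk_count grp k s i = #|grpset grp i| - #|D :&: grpset grp i| /\
  #|D :&: grpset grp i| <= #|grpset grp i|.
Proof.
move=> h; split; last by apply: subset_leq_card; apply: subsetIr.
rewrite /topk_count setIC -cardsD; apply: eq_card => a.
by rewrite !inE h andbC.
Qed.

Lemma fair_of_constrained (R : realType) d g (grp : 'I_d -> 'I_g)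
  (alpha beta : 'I_g -> R) k (s : {perm 'I_d}) (D : {set 'I_d}) :
  (forall a, (rank s a <= k) = (a \notin D)) ->
  constrained grp (fun i => (#|grpset grp i|%:Z - Num.ceil (beta i * k%:R))%R)
    (fun i => (#|grpset grp i|%:Z - Num.floor (alpha i * k%:R))%R) D ->
  kfair grp alpha beta k s.
Proof.
move=> h hc i; have [E1 E2] := @count_eq _ _ grp k s _ i h; have [c1 c2] := hc i.
rewrite E1; move: c1 c2 E2.
set x := Num.ceil _; set y := Num.floor _; set n := #|grpset grp i|; set m := #|_ :&: _|.
move=> c1 c2 E2; split; lia.
Qed.

Lemma constrained_of_fair (R : realType) d g (grp : 'I_d -> 'I_g)
  (alpha beta : 'I_g -> R) k (s : {perm 'I_d}) :
  kfair grp alpha beta k s ->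
  constrained grp (fun i => (#|grpset grp i|%:Z - Num.ceil (beta i * k%:R))%R)
    (fun i => (#|grpset grp i|%:Z - Num.floor (alpha i * k%:R))%R)
    [set a | k < rank s a].
Proof.
move=> hf i.
have h : forall a, (rank s a <= k) = (a \notin [set a | k < rank s a]).
  by move=> a; rewrite inE -leqNgt.
have [E1 E2] := @count_eq _ _ grp k s _ i h; have [c1 c2] := hf i.
rewrite E1 in c1 c2; move: c1 c2 E2.
set x := Num.ceil _; set y := Num.floor _; set n := #|grpset grp i|; set m := #|_ :&: _|.
move=> c1 c2 E2; split; lia.
Qed.

Theorem lemmaB2 (R : realType) (d g : nat) (grp : 'I_d -> 'I_g)
  (S : {set {perm 'I_d}}) (alpha beta : 'I_g -> R) (k : nat)
  (Dtau : {set 'I_d}) (tau : 'I_d -> nat)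
  (sigma sigmastar : {perm 'I_d}) :
  S != set0 ->
  (forall i, (0 <= alpha i <= 1)%R /\ (0 <= beta i <= 1)%R) ->
  1 <= k <= d ->
  (exists s : {perm 'I_d}, kfair grp alpha beta k s) ->
  let alpha' := fun i => (#|grpset grp i|%:Z - Num.ceil (beta i * k%:R))%R in
  let beta' := fun i => (#|grpset grp i|%:Z - Num.floor (alpha i * k%:R))%R in
  (* tau: constrained bottom-(d-k) ranking minimizing the directed objective *)
  bottom_ranking (d - k) Dtau tau ->
  constrained grp alpha' beta' Dtau ->
  (forall (D : {set 'I_d}) (t : 'I_d -> nat),
      bottom_ranking (d - k) D t -> constrained grp alpha' beta' D ->
      Objdir S Dtau tau <= Objdir S D t) ->
  (* sigma: extension of tau minimizing the directed objective over [d] *)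
  (forall a, a \in Dtau -> rank sigma a = tau a) ->
  (forall s : {perm 'I_d}, (forall a, a \in Dtau -> rank s a = tau a) ->
      Objdir S setT (rank sigma) <= Objdir S setT (rank s)) ->
  (* sigmastar: optimal fair ranking *)
  kfair grp alpha beta k sigmastar ->
  (forall s : {perm 'I_d}, kfair grp alpha beta k s -> Obj S sigmastar <= Obj S s) ->
  let OPT := Obj S sigmastar in
  let Rstar := [set a | k < rank sigmastar a] in
  kfair grp alpha beta k sigma /\
  Obj S sigma <= Objdir S Rstar (rank sigmastar) + OPT.
Proof.
move=> _ _ /andP[k1 kd] _ alpha' beta' [hrange hinj hsurj] hcon hmin hext hsig
  hfair _ OPT Rstar.
have dk : d - (d - k) + 1 = k.+1 by lia.
rewrite dk in hrange hsurj.
have rank_lt : forall (s : {perm 'I_d}) a, rank s a <= d.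
  by move=> s a; rewrite /rank ltn_ord.
have rank_inj : forall (s : {perm 'I_d}) a b, rank s a = rank s b -> a = b.
  by move=> s a b [] /val_inj /perm_inj.
have topk : forall a, (rank sigma a <= k) = (a \notin Dtau).
  move=> a; case aD: (a \in Dtau) => /=.
    by rewrite hext //; have /andP[h _] := hrange a aD; apply/negbTE; rewrite -ltnNge.
  rewrite leqNgt; apply/negP => hk.
  have [b bD hb] := hsurj (rank sigma a) (introT andP (conj hk (rank_lt sigma a))).
  have := hext b bD; rewrite hb => /rank_inj eab.
  by move: bD; rewrite eab aD.
split; first exact: (@fair_of_constrained R d g grp alpha beta k sigma Dtau topk hcon).
pose cnt a := #|[set b | (b \notin Dtau) && (val (sigmastar b) < val (sigmastar a))]|.
have cnt_k : forall a, a \notin Dtau -> cnt a < k.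
  move=> a aD.
  have h1 : #|~: Dtau| <= k.
    apply: leq_trans (card_lt d k); apply: (@card_inj_le _ _ _ sigma) => //.
      exact: perm_inj.
    by move=> b; rewrite !inE -topk.
  apply: leq_trans h1; apply: proper_card; apply/properP; split.
    by apply/subsetP => b; rewrite !inE => /andP[].
  by exists a; rewrite !inE ?aD // ltnn andbF.
have cnt_s : forall a, cnt a <= val (sigmastar a).
  move=> a; apply: leq_trans (card_lt d _); apply: (@card_inj_le _ _ _ sigmastar).
    exact: perm_inj.
  by move=> b; rewrite !inE => /andP[].
have cnt_mono : forall a b, a \notin Dtau -> b \notin Dtau ->
    val (sigmastar a) < val (sigmastar b) -> cnt a < cnt b.
  move=> a b aD bD hab; apply: proper_card; apply/properP; split.
    apply/subsetP => c; rewrite !inE => /andP[-> h] /=; exact: ltn_trans hab.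
  by exists a; rewrite !inE ?aD ?hab // ltnn andbF.
pose fv a := if a \in Dtau then (tau a).-1 else cnt a.
have fv_lt : forall a, fv a < d.
  move=> a; rewrite /fv; case: ifP => aD.
    have /andP[h1 h2] := hrange a aD; lia.
  have := cnt_k a (negbT aD); lia.
pose f a : 'I_d := insubd a (fv a).
have fE : forall a, val (f a) = fv a by move=> a; rewrite val_insubd fv_lt.
have finj : injective f.
  move=> a b /(congr1 val); rewrite !fE /fv.
  case aD: (a \in Dtau); case bD: (b \in Dtau).
  - have /andP[h1 _] := hrange a aD; have /andP[h2 _] := hrange b bD.
    move=> e; apply: hinj => //; lia.
  - have /andP[h1 _] := hrange a aD; have := cnt_k b (negbT bD); lia.
  - have /andP[h1 _] := hrange b bD; have := cnt_k a (negbT aD); lia.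
  - move=> e; case: (ltngtP (val (sigmastar a)) (val (sigmastar b))) => h.
    + by have := cnt_mono a b (negbT aD) (negbT bD) h; rewrite e ltnn.
    + by have := cnt_mono b a (negbT bD) (negbT aD) h; rewrite e ltnn.
    + by apply: (@perm_inj _ sigmastar); apply: val_inj.
pose s := perm finj.
have rsE : forall a, rank s a = (fv a).+1 by move=> a; rewrite /rank permE fE.
have s_ext : forall a, a \in Dtau -> rank s a = tau a.
  move=> a aD; rewrite rsE /fv aD; have /andP[h1 _] := hrange a aD; lia.
have s_le : forall a, a \in ~: Dtau -> rank s a <= rank sigmastar a.
  move=> a; rewrite inE => aD; rewrite rsE /fv (negbTE aD) /rank ltnS; exact: cnt_s.
have hbR : bottom_ranking (d - k) Rstar (rank sigmastar).
  rewrite /bottom_ranking dk; split.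
  - by move=> a; rewrite inE => ->; rewrite rank_lt.
  - by move=> a b _ _; apply: rank_inj.
  - move=> r /andP[r1 r2]; have hr : r.-1 < d by lia.
    have hx : sigmastar ((sigmastar^-1)%g (Ordinal hr)) = Ordinal hr by apply: permKV.
    exists ((sigmastar^-1)%g (Ordinal hr)); rewrite ?inE /rank hx /=; lia.
have hcR : constrained grp alpha' beta' Rstar by exact: constrained_of_fair.
have := hmin _ _ hbR hcR => h1.
rewrite ObjE; apply: leq_trans (hsig s s_ext) _.
rewrite (@Objdir_split d S Dtau (rank s)) /OPT ObjE.
rewrite (@Objdir_split d S (~: Dtau) (rank sigmastar)).
rewrite (@Objdir_eq d S Dtau (rank s) tau s_ext).
apply: leq_add => //.
apply: leq_trans (leq_addr _ _); exact: Objdir_le.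
Qed.
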